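(* For every state $\rho$ on $\mathbb{C}^d\otimes\mathbb{C}^d$, \[ E_R(\rho)\ge-\log\Big(\max\big\{\langle x\otimes y|\rho|x\otimes y\rangle:\ x,y\in\mathbb{C}^d,\ \|x\|=\|y\|=1\big\}\Big)-S(\rho). \]
   Context: Logarithms are base 2; $S$ is the von Neumann entropy. $E_R(\rho)=\inf\{S(\rho\|\sigma):\sigma\text{ separable across }\mathbb{C}^d:\mathbb{C}^d\}$ with $S(\rho\|\sigma)=\operatorname{tr}[\rho\log\rho-\rho\log\sigma]$. *)

(* Defs.v *)
From Stdlib Require Import Reals.
Open Scope R_scope.

Record C := mkC { Re : R; Im : R }.
Definition CR (r : R) : C := mkC r 0.
Definition Cadd (z w : C) : C := mkC (Re z + Re w) (Im z + Im w).
Definition Cmul (z w : C) : C :=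
  mkC (Re z * Re w - Im z * Im w) (Re z * Im w + Im z * Re w).
Definition Cconj (z : C) : C := mkC (Re z) (- Im z).
Definition Cnorm2 (z : C) : R := Re z * Re z + Im z * Im z.

Fixpoint Csum (n : nat) (f : nat -> C) : C :=
  match n with O => CR 0 | S m => Cadd (Csum m f) (f m) end.
Fixpoint Rsum (n : nat) (f : nat -> R) : R :=
  match n with O => 0 | S m => Rsum m f + f m end.

Definition log2 (x : R) : R := ln x / ln 2.

(* A vector of C^d : entries at indices i < d. *)
Definition vec := nat -> C.
(* A vector of C^d (x) C^d : entries indexed by (a,b), a,b < d. *)
Definition bvec := nat -> nat -> C.
(* An operator on C^d (x) C^d : matrix entry  <a b| rho |c e>  = rho a b c e. *)
Definition bop := nat -> nat -> nat -> nat -> C.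

Definition vinner (d : nat) (x y : vec) : C :=
  Csum d (fun i => Cmul (Cconj (x i)) (y i)).
Definition unit_vec (d : nat) (x : vec) : Prop := vinner d x x = CR 1.

Definition binner (d : nat) (u v : bvec) : C :=
  Csum d (fun a => Csum d (fun b => Cmul (Cconj (u a b)) (v a b))).

Definition quad (d : nat) (rho : bop) (w : bvec) : C :=
  Csum d (fun a => Csum d (fun b => Csum d (fun c => Csum d (fun e =>
    Cmul (Cconj (w a b)) (Cmul (rho a b c e) (w c e)))))).

Definition btrace (d : nat) (rho : bop) : C :=
  Csum d (fun a => Csum d (fun b => rho a b a b)).

Definition tensor (x y : vec) : bvec := fun a b => Cmul (x a) (y b).

Definition bop_eq (d : nat) (A B : bop) : Prop :=
  forall a b c e, (a < d)%nat -> (b < d)%nat -> (c < d)%nat -> (e < d)%nat ->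
    A a b c e = B a b c e.

Definition hermitian (d : nat) (rho : bop) : Prop :=
  forall a b c e, (a < d)%nat -> (b < d)%nat -> (c < d)%nat -> (e < d)%nat ->
    rho a b c e = Cconj (rho c e a b).

Definition psd (d : nat) (rho : bop) : Prop :=
  hermitian d rho /\ forall w : bvec, 0 <= Re (quad d rho w).

Definition is_state (d : nat) (rho : bop) : Prop :=
  psd d rho /\ btrace d rho = CR 1.

Definition rank1_sum (n : nat) (lam : nat -> R) (u : nat -> bvec) : bop :=
  fun a b c e => Csum n (fun k => Cmul (CR (lam k)) (Cmul (u k a b) (Cconj (u k c e)))).

Definition spectral (d : nat) (rho : bop) (lam : nat -> R) (u : nat -> bvec) : Prop :=
  (forall k l, (k < d * d)%nat -> (l < d * d)%nat ->
     binner d (u k) (u l) = CR (if Nat.eqb k l then 1 else 0)) /\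
  bop_eq d rho (rank1_sum (d * d) lam u).

(* von Neumann entropy S(rho) = - tr rho log rho (base 2, 0 log 0 = 0). *)
Definition vN_entropy (d : nat) (rho : bop) (s : R) : Prop :=
  exists lam u, spectral d rho lam u /\
    s = - Rsum (d * d) (fun k => lam k * log2 (lam k)).

(* Quantum relative entropy S(rho||sigma) = tr[rho log rho - rho log sigma],
   computed from spectral decompositions rho = sum p_i |u_i><u_i|,
   sigma = sum q_j |v_j><v_j|:
     tr rho log rho   = sum_i p_i log p_i,
     tr rho log sigma = sum_{i,j} p_i |<v_j|u_i>|^2 log q_j.
   It is finite iff supp rho is contained in supp sigma, i.e. whenever
   p_i > 0 and q_j = 0 we have <v_j|u_i> = 0.  [rel_entropy d rho sigma r]
   says that S(rho||sigma) is finite and equals r. *)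
Definition rel_entropy (d : nat) (rho sigma : bop) (r : R) : Prop :=
  exists p u q v, spectral d rho p u /\ spectral d sigma q v /\
    (forall i j, (i < d * d)%nat -> (j < d * d)%nat ->
        0 < p i -> q j = 0 -> binner d (v j) (u i) = CR 0) /\
    r = Rsum (d * d) (fun i => p i * log2 (p i))
        - Rsum (d * d) (fun i => Rsum (d * d) (fun j =>
             p i * Cnorm2 (binner d (v j) (u i)) * log2 (q j))).

(* Separable states on C^d : C^d: convex hulls of product states
   (in finite dimension the convex hull of pure product states is closed,
   so finite convex combinations of |x (x) y><x (x) y| give all of them). *)
Definition separable (d : nat) (sigma : bop) : Prop :=
  exists (n : nat) (p : nat -> R) (x y : nat -> vec),
    (forall k, (k < n)%nat -> 0 <= p k) /\ Rsum n p = 1 /\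
    (forall k, (k < n)%nat -> unit_vec d (x k) /\ unit_vec d (y k)) /\
    bop_eq d sigma (rank1_sum n p (fun k => tensor (x k) (y k))).

Definition is_glb (E : R -> Prop) (m : R) : Prop :=
  (forall r, E r -> m <= r) /\ (forall b, (forall r, E r -> b <= r) -> b <= m).

(* E_R(rho) = inf { S(rho||sigma) : sigma separable }  (infinite values do not
   affect the infimum since it is finite).  [ER_is d rho e] : E_R(rho) = e. *)
Definition ER_is (d : nat) (rho : bop) (e : R) : Prop :=
  is_glb (fun r => exists sigma, separable d sigma /\ rel_entropy d rho sigma r) e.

Definition prod_overlaps (d : nat) (rho : bop) (r : R) : Prop :=
  exists x y : vec, unit_vec d x /\ unit_vec d y /\
    CR r = quad d rho (tensor x y).

(* Main.v *)
Require Import Defs.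
From Stdlib Require Import Reals.
From Stdlib Require Import Lra Lia Setoid Morphisms Ring.
Require Import Defs.
Open Scope R_scope.

Definition Copp (z : C) : C := mkC (- Re z) (- Im z).
Definition Csub (z w : C) : C := Cadd z (Copp w).

Lemma C_ext : forall z w, Re z = Re w -> Im z = Im w -> z = w.
Proof. intros [a b] [c e]; simpl; intros -> ->; reflexivity. Qed.

Lemma C_ring : ring_theory (CR 0) (CR 1) Cadd Cmul Csub Copp (@eq C).
Proof.
constructor; intros; apply C_ext; unfold Cadd, Cmul, Csub, Copp, CR; simpl; ring.
Qed.
Add Ring Cring : C_ring.

Lemma Cconj_add z w : Cconj (Cadd z w) = Cadd (Cconj z) (Cconj w).
Proof. apply C_ext; simpl; ring. Qed.
Lemma Cconj_mul z w : Cconj (Cmul z w) = Cmul (Cconj z) (Cconj w).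
Proof. apply C_ext; simpl; ring. Qed.
Lemma Cconj_conj z : Cconj (Cconj z) = z.
Proof. apply C_ext; simpl; ring. Qed.
Lemma Cconj_CR r : Cconj (CR r) = CR r.
Proof. apply C_ext; simpl; ring. Qed.
Lemma CR_mul a b : CR (a * b) = Cmul (CR a) (CR b).
Proof. apply C_ext; simpl; ring. Qed.
Lemma CR_add a b : CR (a + b) = Cadd (CR a) (CR b).
Proof. apply C_ext; simpl; ring. Qed.
Lemma Cnorm2_conj z : Cmul (Cconj z) z = CR (Cnorm2 z).
Proof. apply C_ext; unfold Cnorm2; simpl; ring. Qed.
Lemma Cnorm2_conj' z : Cmul z (Cconj z) = CR (Cnorm2 z).
Proof. apply C_ext; unfold Cnorm2; simpl; ring. Qed.
Lemma Cnorm2_Cconj z : Cnorm2 (Cconj z) = Cnorm2 z.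
Proof. unfold Cnorm2; simpl; ring. Qed.
Lemma Cnorm2_nonneg z : 0 <= Cnorm2 z.
Proof. unfold Cnorm2; nra. Qed.

Lemma Csum_ext n f g : (forall i, (i < n)%nat -> f i = g i) -> Csum n f = Csum n g.
Proof. induction n; simpl; intros H; auto. rewrite IHn by auto. rewrite H by lia. auto. Qed.
Lemma Rsum_ext n f g : (forall i, (i < n)%nat -> f i = g i) -> Rsum n f = Rsum n g.
Proof. induction n; simpl; intros H; auto. rewrite IHn by auto. rewrite H by lia. auto. Qed.

#[export] Instance Csum_proper n : Proper (pointwise_relation nat eq ==> eq) (Csum n).
Proof. intros f g H. apply Csum_ext; auto. Qed.
#[export] Instance Rsum_proper n : Proper (pointwise_relation nat eq ==> eq) (Rsum n).
Proof. intros f g H. apply Rsum_ext; auto. Qed.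

Lemma Csum_add n f g : Csum n (fun i => Cadd (f i) (g i)) = Cadd (Csum n f) (Csum n g).
Proof. induction n; simpl. apply C_ext; simpl; ring. rewrite IHn. ring. Qed.
Lemma Csum_mul_l n c f : Csum n (fun i => Cmul c (f i)) = Cmul c (Csum n f).
Proof. induction n; simpl. apply C_ext; simpl; ring. rewrite IHn. ring. Qed.
Lemma Csum_mul_r n c f : Csum n (fun i => Cmul (f i) c) = Cmul (Csum n f) c.
Proof. induction n; simpl. apply C_ext; simpl; ring. rewrite IHn. ring. Qed.
Lemma Csum_swap n m f : Csum n (fun i => Csum m (fun j => f i j)) = Csum m (fun j => Csum n (fun i => f i j)).
Proof. induction n; simpl. induction m; simpl; auto. rewrite <- IHm. ring.
 rewrite IHn. rewrite <- Csum_add. reflexivity. Qed.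
Lemma Cconj_sum n f : Cconj (Csum n f) = Csum n (fun i => Cconj (f i)).
Proof. induction n; simpl. apply C_ext; simpl; ring. rewrite Cconj_add, IHn. auto. Qed.
Lemma Csum_CR n f : Csum n (fun i => CR (f i)) = CR (Rsum n f).
Proof. induction n; simpl. auto. rewrite IHn, CR_add. auto. Qed.
Lemma Re_Csum n f : Re (Csum n f) = Rsum n (fun i => Re (f i)).
Proof. induction n; simpl; auto. rewrite IHn; auto. Qed.
Lemma Im_Csum n f : Im (Csum n f) = Rsum n (fun i => Im (f i)).
Proof. induction n; simpl; auto. rewrite IHn; auto. Qed.

Lemma Rsum_add n f g : Rsum n (fun i => f i + g i) = Rsum n f + Rsum n g.
Proof. induction n; simpl. ring. rewrite IHn. ring. Qed.
Lemma Rsum_scal n c f : Rsum n (fun i => c * f i) = c * Rsum n f.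
Proof. induction n; simpl. ring. rewrite IHn. ring. Qed.
Lemma Rsum_scal_r n c f : Rsum n (fun i => f i * c) = Rsum n f * c.
Proof. induction n; simpl. ring. rewrite IHn. ring. Qed.
Lemma Rsum_opp n f : Rsum n (fun i => - f i) = - Rsum n f.
Proof. induction n; simpl. ring. rewrite IHn. ring. Qed.
Lemma Rsum_swap n m f : Rsum n (fun i => Rsum m (fun j => f i j)) = Rsum m (fun j => Rsum n (fun i => f i j)).
Proof. induction n; simpl. induction m; simpl; auto. rewrite <- IHm. ring.
 rewrite IHn. rewrite <- Rsum_add. reflexivity. Qed.
Lemma Rsum_le n f g : (forall i, (i < n)%nat -> f i <= g i) -> Rsum n f <= Rsum n g.
Proof. induction n; simpl; intros H. lra. assert (f n <= g n) by (apply H; lia).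
 assert (Rsum n f <= Rsum n g) by (apply IHn; auto). lra. Qed.
Lemma Rsum_nonneg n f : (forall i, (i < n)%nat -> 0 <= f i) -> 0 <= Rsum n f.
Proof. induction n; simpl; intros H. lra. assert (0 <= f n) by (apply H; lia).
 assert (0 <= Rsum n f) by (apply IHn; auto). lra. Qed.
Lemma Rsum_term n f i : (forall k, (k < n)%nat -> 0 <= f k) -> (i < n)%nat -> f i <= Rsum n f.
Proof. induction n; intros H Hi. lia. simpl. destruct (Nat.eq_dec i n).
 subst. assert (0 <= Rsum n f) by (apply Rsum_nonneg; auto). lra.
 assert (f i <= Rsum n f) by (apply IHn; auto; lia). assert (0 <= f n) by auto. lra. Qed.
Lemma Rsum_delta n f i : (i < n)%nat -> Rsum n (fun k => f k * (if Nat.eqb k i then 1 else 0)) = f i.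
Proof. induction n; intros Hi. lia. simpl. destruct (Nat.eq_dec i n).
 - subst. rewrite Nat.eqb_refl. rewrite (Rsum_ext _ _ (fun _ => 0)).
   + assert (Z : forall m, Rsum m (fun _ => 0) = 0) by (induction m; simpl; try rewrite IHm; ring).
     rewrite Z. ring.
   + intros k Hk. destruct (Nat.eqb_spec k n). lia. ring.
 - rewrite IHn by lia. destruct (Nat.eqb_spec n i). lia. ring. Qed.

Lemma quad_ext d A B w : bop_eq d A B -> quad d A w = quad d B w.
Proof. intros H. unfold quad. apply Csum_ext; intros a Ha. apply Csum_ext; intros b Hb.
 apply Csum_ext; intros c Hc. apply Csum_ext; intros e He. rewrite H; auto. Qed.

Lemma Csum2_prod d (X Y : nat -> nat -> C) c0 :
  Csum d (fun a => Csum d (fun b => Csum d (fun c => Csum d (fun e => Cmul c0 (Cmul (X a b) (Y c e))))))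
  = Cmul c0 (Cmul (Csum d (fun a => Csum d (X a))) (Csum d (fun c => Csum d (Y c)))).
Proof.
rewrite <- Csum_mul_r. rewrite <- Csum_mul_l. apply Csum_ext; intros a Ha.
rewrite <- Csum_mul_r. rewrite <- Csum_mul_l. apply Csum_ext; intros b Hb.
rewrite <- Csum_mul_l. rewrite <- Csum_mul_l. apply Csum_ext; intros c Hc.
rewrite <- Csum_mul_l. rewrite <- Csum_mul_l. apply Csum_ext; intros e He. ring.
Qed.

Lemma quad_rank1 d n lam u z : quad d (rank1_sum n lam u) z =
  CR (Rsum n (fun k => lam k * Cnorm2 (binner d (u k) z))).
Proof.
unfold quad, rank1_sum.
assert (E : forall a b c e, Cmul (Cconj (z a b)) (Cmul (Csum n (fun k => Cmul (CR (lam k)) (Cmul (u k a b) (Cconj (u k c e))))) (z c e))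
  = Csum n (fun k => Cmul (CR (lam k)) (Cmul (Cmul (Cconj (z a b)) (u k a b)) (Cmul (Cconj (u k c e)) (z c e))))).
{ intros. rewrite <- Csum_mul_r, <- Csum_mul_l. apply Csum_ext; intros; ring. }
setoid_rewrite E. clear E.
setoid_rewrite (Csum_swap d n).
setoid_rewrite (Csum_swap d n).
setoid_rewrite (Csum_swap d n).
setoid_rewrite (Csum_swap d n).
rewrite <- Csum_CR. apply Csum_ext; intros k Hk.
rewrite (Csum2_prod d (fun a b => Cmul (Cconj (z a b)) (u k a b)) (fun c e => Cmul (Cconj (u k c e)) (z c e))).
rewrite CR_mul, <- Cnorm2_conj. f_equal. f_equal.
unfold binner. rewrite Cconj_sum. apply Csum_ext; intros a Ha. rewrite Cconj_sum.
apply Csum_ext; intros b Hb. rewrite Cconj_mul, Cconj_conj. ring.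
Qed.

Lemma Rsum_split N M f : Rsum (N + M) f = Rsum N f + Rsum M (fun i => f (N + i)%nat).
Proof. induction M; simpl. rewrite Nat.add_0_r. ring. rewrite Nat.add_succ_r. simpl. rewrite IHM. ring. Qed.

Definition delta (i j : nat) : R := if Nat.eqb i j then 1 else 0.

Definition realify (N : nat) (F : nat -> nat -> C) (i j : nat) : R :=
  if Nat.ltb i N then (if Nat.ltb j N then Re (F j i) else - Im (F (j - N)%nat i))
  else (if Nat.ltb j N then Im (F j (i - N)%nat) else Re (F (j - N)%nat (i - N)%nat)).

Lemma realify_ll N F i j : (i < N)%nat -> (j < N)%nat -> realify N F i j = Re (F j i).
Proof. intros. unfold realify. rewrite (proj2 (Nat.ltb_lt i N)), (proj2 (Nat.ltb_lt j N)); auto. Qed.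
Lemma realify_lh N F i j : (i < N)%nat -> realify N F i (N + j) = - Im (F j i).
Proof. intros. unfold realify. rewrite (proj2 (Nat.ltb_lt i N)) by auto.
 rewrite (proj2 (Nat.ltb_ge (N+j) N)) by lia. replace (N + j - N)%nat with j by lia. auto. Qed.
Lemma realify_hl N F i j : (j < N)%nat -> realify N F (N + i) j = Im (F j i).
Proof. intros. unfold realify. rewrite (proj2 (Nat.ltb_lt j N)) by auto.
 rewrite (proj2 (Nat.ltb_ge (N+i) N)) by lia. replace (N + i - N)%nat with i by lia. auto. Qed.
Lemma realify_hh N F i j : realify N F (N + i) (N + j) = Re (F j i).
Proof. intros. unfold realify.
 rewrite (proj2 (Nat.ltb_ge (N+i) N)) by lia. rewrite (proj2 (Nat.ltb_ge (N+j) N)) by lia.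
 replace (N + i - N)%nat with i by lia. replace (N + j - N)%nat with j by lia. auto. Qed.

Lemma split_idx N j : (j < N + N)%nat -> (j < N)%nat \/ exists j', (j' < N)%nat /\ j = (N + j')%nat.
Proof. intros. destruct (Nat.lt_ge_cases j N). auto. right. exists (j - N)%nat. lia. Qed.

Lemma delta_shift N i j : delta (N + i) (N + j) = delta i j.
Proof. unfold delta. destruct (Nat.eqb_spec (N+i) (N+j)), (Nat.eqb_spec i j); auto; lia. Qed.
Lemma delta_lh N i j : (i < N)%nat -> delta i (N + j) = 0.
Proof. unfold delta. intros. destruct (Nat.eqb_spec i (N+j)); auto; lia. Qed.
Lemma delta_hl N i j : (i < N)%nat -> delta (N + j) i = 0.
Proof. unfold delta. intros. destruct (Nat.eqb_spec (N+j) i); auto; lia. Qed.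

Lemma realify_cols N F :
  (forall k l, (k < N)%nat -> (l < N)%nat -> Csum N (fun m => Cmul (Cconj (F k m)) (F l m)) = CR (delta k l)) ->
  forall j k, (j < N + N)%nat -> (k < N + N)%nat ->
   Rsum (N + N) (fun i => realify N F i j * realify N F i k) = delta j k.
Proof.
intros H j k Hj Hk. rewrite Rsum_split.
destruct (split_idx N j Hj) as [Hj'|[j' [Hj' ->]]];
destruct (split_idx N k Hk) as [Hk'|[k' [Hk' ->]]].
- rewrite (Rsum_ext _ _ (fun i => Re (F j i) * Re (F k i))) by (intros; rewrite !realify_ll; auto).
  rewrite (Rsum_ext _ (fun i => realify N F (N + i)%nat _ * realify N F (N + i)%nat _) (fun i => Im (F j i) * Im (F k i))) by (intros; rewrite !realify_hl; auto).
  generalize (f_equal Re (H j k Hj' Hk')). rewrite Re_Csum. simpl. intros <-. rewrite <- Rsum_add.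
  apply Rsum_ext; intros; simpl; ring.
- rewrite (Rsum_ext _ _ (fun i => Re (F j i) * - Im (F k' i))) by (intros; rewrite realify_ll, realify_lh; auto).
  rewrite (Rsum_ext _ (fun i => realify N F (N + i)%nat _ * realify N F (N + i)%nat _) (fun i => Im (F j i) * Re (F k' i))) by (intros; rewrite realify_hl, realify_hh; auto).
  generalize (f_equal Im (H j k' Hj' Hk')). rewrite Im_Csum. simpl. rewrite !delta_lh by auto. intros E.
  rewrite <- Rsum_add. transitivity (- Rsum N (fun i => Im (Cmul (Cconj (F j i)) (F k' i)))).
  rewrite <- Rsum_opp. apply Rsum_ext; intros; simpl; ring. simpl. rewrite E; ring.
- rewrite (Rsum_ext _ _ (fun i => - Im (F j' i) * Re (F k i))) by (intros; rewrite realify_lh, realify_ll; auto).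
  rewrite (Rsum_ext _ (fun i => realify N F (N + i)%nat _ * realify N F (N + i)%nat _) (fun i => Re (F j' i) * Im (F k i))) by (intros; rewrite realify_hh, realify_hl; auto).
  generalize (f_equal Im (H j' k Hj' Hk')). rewrite Im_Csum. simpl. rewrite !delta_hl by auto. intros E.
  rewrite <- Rsum_add. rewrite <- E.
  apply Rsum_ext; intros; simpl; ring.
- rewrite (Rsum_ext _ _ (fun i => - Im (F j' i) * - Im (F k' i))) by (intros; rewrite !realify_lh; auto).
  rewrite (Rsum_ext _ (fun i => realify N F (N + i)%nat _ * realify N F (N + i)%nat _) (fun i => Re (F j' i) * Re (F k' i))) by (intros; rewrite !realify_hh; auto).
  rewrite delta_shift.
  generalize (f_equal Re (H j' k' Hj' Hk')). rewrite Re_Csum. simpl. intros <-. rewrite <- Rsum_add.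
  apply Rsum_ext; intros; simpl; ring.
Qed.

Definition RC_stmt := forall n (G : nat -> nat -> R),
  (forall j k, (j < n)%nat -> (k < n)%nat -> Rsum n (fun i => G i j * G i k) = delta j k) ->
  forall i l, (i < n)%nat -> (l < n)%nat -> Rsum n (fun j => G i j * G l j) = delta i l.

Lemma complex_complete (RC : RC_stmt) N F :
  (forall k l, (k < N)%nat -> (l < N)%nat -> Csum N (fun m => Cmul (Cconj (F k m)) (F l m)) = CR (delta k l)) ->
  forall m m', (m < N)%nat -> (m' < N)%nat ->
   Csum N (fun k => Cmul (F k m) (Cconj (F k m'))) = CR (delta m m').
Proof.
intros H m m' Hm Hm'.
assert (R2 := RC (N + N)%nat (realify N F) (realify_cols N F H)).
apply C_ext.
- rewrite Re_Csum. simpl.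
  rewrite <- (R2 m m') by lia. rewrite Rsum_split, <- Rsum_add.
  apply Rsum_ext; intros k Hk. rewrite !realify_ll, !realify_lh by auto. simpl. ring.
- rewrite Im_Csum. simpl.
  assert (E := R2 m (N + m')%nat ltac:(lia) ltac:(lia)). rewrite delta_lh in E by auto.
  rewrite Rsum_split, <- Rsum_add in E.
  transitivity (- Rsum N (fun i => realify N F m i * realify N F (N + m') i +
     realify N F m (N + i) * realify N F (N + m') (N + i))).
  + rewrite <- Rsum_opp. apply Rsum_ext; intros k Hk.
    rewrite realify_ll, realify_hl, realify_lh, realify_hh by auto. simpl. ring.
  + rewrite E. ring.
Qed.

Lemma Csum_split N M f : Csum (N + M) f = Cadd (Csum N f) (Csum M (fun i => f (N + i)%nat)).
Proof. induction M; simpl. rewrite Nat.add_0_r. apply C_ext; simpl; ring. rewrite Nat.add_succ_r. simpl. rewrite IHM. ring. Qed.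

Lemma Csum_flat d (g : nat -> nat -> C) :
  Csum d (fun a => Csum d (fun b => g a b)) = Csum (d * d) (fun m => g (m / d)%nat (m mod d)%nat).
Proof.
assert (forall n, Csum n (fun a => Csum d (fun b => g a b)) = Csum (n * d) (fun m => g (m / d)%nat (m mod d)%nat)).
{ induction n. simpl. auto. simpl. rewrite IHn. replace (d + n * d)%nat with (n * d + d)%nat by lia.
  rewrite Csum_split. f_equal. apply Csum_ext; intros b Hb.
  assert (d <> 0)%nat by lia.
  replace (n * d + b)%nat with (b + n * d)%nat by lia.
  rewrite Nat.div_add by auto. rewrite Nat.mod_add by auto.
  rewrite Nat.div_small, Nat.mod_small by auto. auto. }
apply H.
Qed.

Lemma Csum_delta n f i : (i < n)%nat -> Csum n (fun k => Cmul (f k) (CR (delta i k))) = f i.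
Proof.
intros Hi. apply C_ext.
- rewrite Re_Csum. simpl. rewrite (Rsum_ext _ _ (fun k => Re (f k) * (if Nat.eqb k i then 1 else 0))).
  apply Rsum_delta; auto. intros k Hk. unfold delta. rewrite Nat.eqb_sym. ring.
- rewrite Im_Csum. simpl. rewrite (Rsum_ext _ _ (fun k => Im (f k) * (if Nat.eqb k i then 1 else 0))).
  apply Rsum_delta; auto. intros k Hk. unfold delta. rewrite Nat.eqb_sym. ring.
Qed.

Definition ONB (d : nat) (e : nat -> bvec) : Prop :=
  forall k l, (k < d * d)%nat -> (l < d * d)%nat ->
     binner d (e k) (e l) = CR (if Nat.eqb k l then 1 else 0).

Lemma binner_flat d u v : binner d u v =
  Csum (d * d) (fun m => Cmul (Cconj (u (m / d)%nat (m mod d)%nat)) (v (m / d)%nat (m mod d)%nat)).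
Proof. unfold binner. apply Csum_flat. Qed.

Lemma parseval (RC : RC_stmt) d e z : ONB d e ->
  CR (Rsum (d * d) (fun k => Cnorm2 (binner d (e k) z))) = binner d z z.
Proof.
intros H.
set (F := fun k m => e k (m / d)%nat (m mod d)%nat).
set (zf := fun m => z (m / d)%nat (m mod d)%nat).
assert (Hc := complex_complete RC (d * d) F).
assert (Hc' : forall m m', (m < d * d)%nat -> (m' < d * d)%nat ->
   Csum (d * d) (fun k => Cmul (F k m) (Cconj (F k m'))) = CR (delta m m')).
{ apply Hc. intros k l Hk Hl. unfold F. rewrite <- (binner_flat d (e k) (e l)). rewrite H by auto. reflexivity. }
clear Hc.
rewrite <- Csum_CR.
rewrite (Csum_ext _ _ (fun k => Csum (d * d) (fun m' => Csum (d * d) (fun m =>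
   Cmul (Cmul (Cconj (zf m')) (zf m)) (Cmul (F k m') (Cconj (F k m))))))).
2:{ intros k Hk. rewrite <- Cnorm2_conj. rewrite binner_flat. rewrite Cconj_sum.
    rewrite <- Csum_mul_r. apply Csum_ext; intros m' Hm'. rewrite <- Csum_mul_l.
    apply Csum_ext; intros m Hm. unfold F, zf. rewrite Cconj_mul, Cconj_conj. ring. }
rewrite Csum_swap. rewrite binner_flat. apply Csum_ext; intros m' Hm'.
rewrite Csum_swap.
rewrite (Csum_ext _ _ (fun m => Cmul (Cmul (Cconj (zf m')) (zf m)) (CR (delta m' m)))).
- apply (Csum_delta (d * d) (fun m => Cmul (Cconj (zf m')) (zf m)) m'). auto.
- intros m Hm. rewrite Csum_mul_l. rewrite Hc'; auto.
Qed.

Lemma ln_le_xm1 x : 0 < x -> ln x <= x - 1.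
Proof. intros H. generalize (exp_ineq1_le (ln x)). rewrite exp_ln by auto. lra. Qed.

Lemma ln_le_mono x y : 0 < x -> x <= y -> ln x <= ln y.
Proof. intros H1 H2. destruct (Req_dec x y). subst; lra. left; apply ln_increasing; lra. Qed.

Lemma ln_div x y : 0 < x -> 0 < y -> ln (x / y) = ln x - ln y.
Proof. intros. unfold Rdiv. rewrite ln_mult; [rewrite ln_Rinv; [ring|auto]|auto|apply Rinv_0_lt_compat; auto]. Qed.

Lemma log_tangent w x T : 0 <= w -> 0 < T -> (0 < w -> 0 < x) ->
  w * ln x <= w * ln T + w * (x / T - 1).
Proof.
intros Hw HT Hx. destruct Hw as [Hw|Hw]; [|subst; lra].
specialize (Hx Hw). assert (0 < x / T) by (apply Rdiv_lt_0_compat; auto).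
generalize (ln_le_xm1 (x / T) H). rewrite ln_div by auto. intros. nra.
Qed.

Lemma xlnx_tangent p l : 0 <= p -> 0 < l ->
  l * ln l + (ln l + 1) * (p - l) <= p * ln p.
Proof.
intros Hp Hl. destruct Hp as [Hp|Hp]; [|subst; lra].
assert (0 < l / p) by (apply Rdiv_lt_0_compat; auto).
generalize (ln_le_xm1 (l / p) H). rewrite ln_div by auto. intros E.
assert (p * (ln l - ln p) <= p * (l / p - 1)) by (apply Rmult_le_compat_l; lra).
replace (p * (l / p - 1)) with (l - p) in H0 by (field; lra). nra.
Qed.

Lemma Rsum_zero_term n f : (forall k, (k < n)%nat -> 0 <= f k) -> Rsum n f = 0 ->
  forall i, (i < n)%nat -> f i = 0.
Proof. intros H E i Hi. generalize (Rsum_term n f i H Hi) (H i Hi). lra. Qed.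

Lemma Rsum_const0 n : Rsum n (fun _ => 0) = 0.
Proof. induction n; simpl; try rewrite IHn; ring. Qed.

(* convexity of t ln t *)
Lemma entropy_cmp n p lam (B : nat -> nat -> R) :
  (forall i k, (i < n)%nat -> (k < n)%nat -> 0 <= B i k) ->
  (forall i, (i < n)%nat -> 0 <= p i) ->
  (forall k, (k < n)%nat -> lam k = Rsum n (fun i => B i k * p i)) ->
  (forall k, (k < n)%nat -> Rsum n (fun i => B i k) = 1) ->
  (forall i, (i < n)%nat -> Rsum n (fun k => B i k) = 1) ->
  Rsum n (fun k => lam k * ln (lam k)) <= Rsum n (fun i => p i * ln (p i)).
Proof.
intros HB Hp Hl Hc Hr.
apply Rle_trans with (Rsum n (fun k => Rsum n (fun i => B i k * (p i * ln (p i))))).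
- apply Rsum_le; intros k Hk.
  assert (Hl0 : 0 <= lam k) by (rewrite Hl by auto; apply Rsum_nonneg; intros; apply Rmult_le_pos; auto).
  destruct Hl0 as [Hl0|Hl0].
  + apply Rle_trans with (Rsum n (fun i => B i k * (lam k * ln (lam k) + (ln (lam k) + 1) * (p i - lam k)))).
    * rewrite (Rsum_ext _ _ (fun i => (lam k * ln (lam k) - (ln (lam k) + 1) * lam k) * B i k + (ln (lam k) + 1) * (B i k * p i))) by (intros; ring).
      rewrite Rsum_add, Rsum_scal, Rsum_scal, Hc, <- Hl by auto. lra.
    * apply Rsum_le; intros i Hi. apply Rmult_le_compat_l; auto. apply xlnx_tangent; auto.
  + rewrite <- Hl0. rewrite Rmult_0_l.
    assert (Z := Rsum_zero_term n (fun i => B i k * p i) ltac:(intros; apply Rmult_le_pos; auto)).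
    rewrite <- Hl in Z by auto. specialize (Z (eq_sym Hl0)).
    rewrite (Rsum_ext _ _ (fun _ => 0)). rewrite Rsum_const0; lra.
    intros i Hi. rewrite <- Rmult_assoc, Z; auto. ring.
- rewrite Rsum_swap. apply Req_le. apply Rsum_ext; intros i Hi.
  rewrite Rsum_scal_r, Hr; auto. ring.
Qed.

Lemma log_jensen n m (w : nat -> nat -> R) (x : nat -> R) :
  (forall i j, (i < n)%nat -> (j < m)%nat -> 0 <= w i j) ->
  (forall j, (j < m)%nat -> 0 <= x j) ->
  (forall i j, (i < n)%nat -> (j < m)%nat -> 0 < w i j -> 0 < x j) ->
  Rsum n (fun i => Rsum m (fun j => w i j)) = 1 ->
  let T := Rsum n (fun i => Rsum m (fun j => w i j * x j)) in
  0 < T /\ Rsum n (fun i => Rsum m (fun j => w i j * ln (x j))) <= ln T.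
Proof.
intros Hw Hx Hwx HW T.
assert (HT : 0 < T).
{ assert (T0 : 0 <= T) by (apply Rsum_nonneg; intros; apply Rsum_nonneg; intros; apply Rmult_le_pos; auto).
  destruct T0 as [T0|T0]; auto. exfalso.
  assert (Z1 := Rsum_zero_term n (fun i => Rsum m (fun j => w i j * x j)) ltac:(intros; apply Rsum_nonneg; intros; apply Rmult_le_pos; auto) (eq_sym T0)).
  assert (Zw : forall i j, (i < n)%nat -> (j < m)%nat -> w i j = 0).
  { intros i j Hi Hj. assert (Z2 := Rsum_zero_term m (fun j => w i j * x j) ltac:(intros; apply Rmult_le_pos; auto) (Z1 i Hi) j Hj).
    simpl in Z2. destruct (Hw i j Hi Hj) as [P|P]; auto. specialize (Hwx i j Hi Hj P). nra. }
  rewrite (Rsum_ext _ _ (fun _ => 0)) in HW. rewrite Rsum_const0 in HW; lra.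
  intros i Hi. rewrite (Rsum_ext _ _ (fun _ => 0)). apply Rsum_const0. intros; auto. }
split; auto.
apply Rle_trans with (Rsum n (fun i => Rsum m (fun j => (ln T - 1) * w i j + / T * (w i j * x j)))).
- apply Rsum_le; intros i Hi. apply Rsum_le; intros j Hj.
  apply Rle_trans with (w i j * ln T + w i j * (x j / T - 1)).
  apply log_tangent; auto; intros; eapply Hwx; eauto. apply Req_le; unfold Rdiv; ring.
- apply Req_le. rewrite (Rsum_ext _ _ (fun i => (ln T - 1) * Rsum m (fun j => w i j) + / T * Rsum m (fun j => w i j * x j))).
  rewrite Rsum_add, !Rsum_scal, HW. fold T. field. lra.
  intros i Hi. rewrite Rsum_add, !Rsum_scal. auto.
Qed.

Lemma btrace_ext d A B : bop_eq d A B -> btrace d A = btrace d B.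
Proof. intros H. unfold btrace. apply Csum_ext; intros a Ha. apply Csum_ext; intros b Hb. apply H; auto. Qed.

Lemma btrace_rank1 d n lam u : btrace d (rank1_sum n lam u) =
  Csum n (fun k => Cmul (CR (lam k)) (binner d (u k) (u k))).
Proof.
unfold btrace, rank1_sum.
rewrite (Csum_ext d _ (fun a => Csum n (fun k => Csum d (fun b => Cmul (CR (lam k)) (Cmul (u k a b) (Cconj (u k a b))))))).
2:{ intros a Ha. apply Csum_swap. }
rewrite Csum_swap. apply Csum_ext; intros k Hk. unfold binner. rewrite <- Csum_mul_l.
apply Csum_ext; intros a Ha. rewrite <- Csum_mul_l. apply Csum_ext; intros b Hb. ring.
Qed.

Lemma binner_sym d u v : binner d v u = Cconj (binner d u v).
Proof. unfold binner. rewrite Cconj_sum. apply Csum_ext; intros a Ha. rewrite Cconj_sum.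
 apply Csum_ext; intros b Hb. rewrite Cconj_mul, Cconj_conj. ring. Qed.

Lemma Cnorm2_sym d u v : Cnorm2 (binner d v u) = Cnorm2 (binner d u v).
Proof. rewrite binner_sym, Cnorm2_Cconj. auto. Qed.

Lemma quad_spec d rho p u z : spectral d rho p u ->
  quad d rho z = CR (Rsum (d * d) (fun k => p k * Cnorm2 (binner d (u k) z))).
Proof. intros [_ H]. rewrite (quad_ext _ _ _ _ H). apply quad_rank1. Qed.

Lemma quad_onb d rho p u i : spectral d rho p u -> (i < d * d)%nat -> quad d rho (u i) = CR (p i).
Proof.
intros Hs Hi. rewrite (quad_spec _ _ _ _ _ Hs). f_equal.
rewrite (Rsum_ext _ _ (fun k => p k * (if Nat.eqb k i then 1 else 0))).
apply Rsum_delta; auto.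
intros k Hk. rewrite (proj1 Hs) by auto. unfold Cnorm2, CR; simpl. destruct (Nat.eqb k i); ring.
Qed.

Lemma trace_spec d rho p u : spectral d rho p u -> btrace d rho = CR (Rsum (d * d) p).
Proof.
intros Hs. rewrite (btrace_ext _ _ _ (proj2 Hs)), btrace_rank1, <- Csum_CR.
apply Csum_ext; intros k Hk. rewrite (proj1 Hs) by auto. rewrite Nat.eqb_refl. apply C_ext; simpl; ring.
Qed.

Lemma parseval_R (RC : RC_stmt) d e z : ONB d e -> binner d z z = CR 1 ->
  Rsum (d * d) (fun k => Cnorm2 (binner d (e k) z)) = 1.
Proof. intros H1 H2. generalize (parseval RC d e z H1). rewrite H2. intros E. apply (f_equal Re) in E. exact E. Qed.

Lemma main_aux (RC : RC_stmt) :
  forall (d : nat) (rho : bop), is_state d rho ->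
  forall (e M s : R),
    ER_is d rho e ->
    is_lub (prod_overlaps d rho) M ->
    vN_entropy d rho s ->
    e >= - log2 M - s.
Proof.
intros d rho [[_ Hpsd] Htr] e M s HER HM [lam [w [Hw Hs]]].
apply Rle_ge. apply (proj2 HER). intros r [sigma [Hsep [p [u [q [v [Hu [Hv [Hsupp Hr]]]]]]]]].
destruct Hsep as [n' [p' [x [y [Hp'0 [Hp'1 [Hxy Hsig]]]]]]].
assert (ONBu : ONB d u) by exact (proj1 Hu).
assert (ONBv : ONB d v) by exact (proj1 Hv).
assert (ONBw : ONB d w) by exact (proj1 Hw).
assert (Hun : forall i, (i < (d * d))%nat -> binner d (u i) (u i) = CR 1).
{ intros i Hi. rewrite ONBu by auto. rewrite Nat.eqb_refl. auto. }
assert (Hwn : forall i, (i < (d * d))%nat -> binner d (w i) (w i) = CR 1).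
{ intros i Hi. rewrite ONBw by auto. rewrite Nat.eqb_refl. auto. }
assert (Hp : forall i, (i < (d * d))%nat -> 0 <= p i).
{ intros i Hi. generalize (Hpsd (u i)). rewrite (quad_onb _ _ _ _ _ Hu Hi). simpl. auto. }
assert (Hsum : Rsum (d * d) p = 1).
{ rewrite (trace_spec _ _ _ _ Hu) in Htr. apply (f_equal Re) in Htr. exact Htr. }
assert (Hsigq : forall z, quad d sigma z = CR (Rsum n' (fun k => p' k * Cnorm2 (binner d (tensor (x k) (y k)) z)))).
{ intros z. rewrite (quad_ext _ _ _ _ Hsig). apply quad_rank1. }
assert (Hq : forall j, (j < (d * d))%nat -> 0 <= q j).
{ intros j Hj. generalize (quad_onb _ _ _ _ _ Hv Hj). rewrite Hsigq. intros E. apply (f_equal Re) in E.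
  simpl in E. rewrite <- E. apply Rsum_nonneg; intros. apply Rmult_le_pos; auto. apply Cnorm2_nonneg. }
set (B := fun i k => Cnorm2 (binner d (u i) (w k))).
assert (Hent : Rsum (d * d) (fun k => lam k * ln (lam k)) <= Rsum (d * d) (fun i => p i * ln (p i))).
{ apply (entropy_cmp (d * d) p lam B).
  - intros; apply Cnorm2_nonneg.
  - auto.
  - intros k Hk. generalize (quad_onb _ _ _ _ _ Hw Hk). rewrite (quad_spec _ _ _ _ _ Hu).
    intros E. apply (f_equal Re) in E. simpl in E. rewrite <- E. apply Rsum_ext; intros. unfold B. ring.
  - intros k Hk. apply parseval_R; auto.
  - intros i Hi. unfold B. rewrite (Rsum_ext _ _ (fun k => Cnorm2 (binner d (w k) (u i)))).
    apply parseval_R; auto. intros; apply Cnorm2_sym. }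
set (W := fun i j => p i * Cnorm2 (binner d (v j) (u i))).
assert (HJ := log_jensen (d * d) (d * d) W q).
destruct HJ as [HT HJ].
{ intros; unfold W; apply Rmult_le_pos; auto; apply Cnorm2_nonneg. }
{ auto. }
{ intros i j Hi Hj Hpos. destruct (Hq j Hj) as [Q|Q]; auto. exfalso.
  unfold W in Hpos. rewrite (Hsupp i j Hi Hj) in Hpos; auto.
  - unfold Cnorm2, CR in Hpos; simpl in Hpos. lra.
  - destruct (Hp i Hi) as [P|P]; auto. rewrite <- P in Hpos. lra. }
{ unfold W. rewrite (Rsum_ext _ _ (fun i => p i * 1)). rewrite Rsum_scal_r, Hsum. ring.
  intros i Hi. rewrite Rsum_scal. rewrite parseval_R; auto. }
set (T := Rsum (d * d) (fun i => Rsum (d * d) (fun j => W i j * q j))) in *.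
assert (HTM : T <= M).
{ unfold T. apply Rle_trans with (Rsum (d * d) (fun i => p i * Rsum n' (fun k => p' k * Cnorm2 (binner d (tensor (x k) (y k)) (u i))))).
  - apply Req_le. apply Rsum_ext; intros i Hi.
    generalize (quad_spec _ _ _ _ (u i) Hv). rewrite Hsigq. intros E. apply (f_equal Re) in E. simpl in E.
    rewrite E. rewrite <- Rsum_scal. apply Rsum_ext; intros j Hj. unfold W. ring.
  - rewrite (Rsum_ext (d * d) _ (fun i => Rsum n' (fun k => p' k * (p i * Cnorm2 (binner d (u i) (tensor (x k) (y k))))))).
    2:{ intros i Hi. rewrite <- Rsum_scal. apply Rsum_ext; intros k Hk. rewrite Cnorm2_sym. ring. }
    rewrite Rsum_swap.
    apply Rle_trans with (Rsum n' (fun k => p' k * M)).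
    + apply Rsum_le; intros k Hk. rewrite Rsum_scal. apply Rmult_le_compat_l; auto.
      apply (proj1 HM). exists (x k), (y k). destruct (Hxy k Hk) as [Hx Hy]. split; auto. split; auto.
      rewrite (quad_spec _ _ _ _ _ Hu). auto.
    + rewrite Rsum_scal_r, Hp'1. lra. }
assert (HlnT : ln T <= ln M) by (apply ln_le_mono; auto).
assert (Hln2 : 0 < ln 2) by (generalize ln_lt_2; lra).
subst r s. unfold log2.
rewrite (Rsum_ext _ (fun i => p i * (ln (p i) / ln 2)) (fun i => (p i * ln (p i)) * / ln 2)) by (intros; unfold Rdiv; ring).
rewrite (Rsum_ext _ (fun k => lam k * (ln (lam k) / ln 2)) (fun k => (lam k * ln (lam k)) * / ln 2)) by (intros; unfold Rdiv; ring).
rewrite (Rsum_ext _ (fun i => Rsum _ (fun j => p i * Cnorm2 (binner d (v j) (u i)) * (ln (q j) / ln 2)))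
   (fun i => Rsum (d * d) (fun j => W i j * ln (q j)) * / ln 2)).
2:{ intros i Hi. rewrite <- Rsum_scal_r. apply Rsum_ext; intros j Hj. unfold W, Rdiv. ring. }
rewrite !Rsum_scal_r.
assert (0 < / ln 2) by (apply Rinv_0_lt_compat; auto).
unfold Rdiv.
set (A := Rsum (d * d) (fun i => p i * ln (p i))) in *.
set (L := Rsum (d * d) (fun k => lam k * ln (lam k))) in *.
set (J := Rsum (d * d) (fun i => Rsum (d * d) (fun j => W i j * ln (q j)))) in *.
assert (L - ln M <= A - J) by lra.
replace (- (ln M * / ln 2) - - (L * / ln 2)) with ((L - ln M) * / ln 2) by ring.
replace (A * / ln 2 - J * / ln 2) with ((A - J) * / ln 2) by ring.
apply Rmult_le_compat_r; lra.
Qed.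
From mathcomp Require all_boot all_algebra Rstruct.
Module MC.
Import all_boot all_algebra Rstruct.
Import GRing.Theory.
Section MC.
Local Open Scope ring_scope.
Lemma Rsum_big n (f : nat -> R) : Rsum n f = (\sum_(i < n) f i).
Proof.
elim: n => [|n IH]; first by rewrite big_ord0.
by rewrite big_ord_recr /= IH.
Qed.

Lemma real_complete n (G : nat -> nat -> R) :
 (forall j k, (j<n)%nat -> (k<n)%nat -> Rsum n (fun i => Rmult (G i j) (G i k)) = if Nat.eqb j k then R1 else R0) ->
 forall i l, (i<n)%nat -> (l<n)%nat -> Rsum n (fun j => Rmult (G i j) (G l j)) = if Nat.eqb i l then R1 else R0.
Proof.
move=> H i l Hi Hl.
pose A := (\matrix_(i0 < n, j0 < n) G i0 j0 : 'M[R]_n).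
have E : A^T *m A = 1%:M.
  apply/matrixP => j k; rewrite !mxE.
  have := H j k (ltn_ord j) (ltn_ord k); rewrite Rsum_big.
  rewrite (_ : (if Nat.eqb j k then R1 else R0) = ((j == k)%:R : R)).
    by move=> <-; apply: eq_bigr => m _; rewrite !mxE.
  by case: (Nat.eqb_spec j k) => [/val_inj ->|Hne]; [rewrite eqxx | case: eqP => // Hx; case: Hne; rewrite Hx].
have E2 := mulmx1C E.
have := congr1 (fun M : 'M[R]_n => M (Ordinal Hi) (Ordinal Hl)) E2; rewrite /= !mxE.
rewrite Rsum_big.
rewrite (_ : (if Nat.eqb i l then R1 else R0) = ((Ordinal Hi == Ordinal Hl)%:R : R)).
  by move=> <-; apply: eq_bigr => m _; rewrite !mxE.
case: (Nat.eqb_spec i l) => [Hil|Hne].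
  by rewrite (_ : Ordinal Hi = Ordinal Hl) ?eqxx //; apply: val_inj.
by case: eqP => // [[]].
Qed.
End MC.
Lemma rc : RC_stmt.
Proof.
move=> n G H i l Hi Hl.
have := @real_complete n G _ i l.
rewrite /delta; apply.
- by move=> j k /ssrnat.ltP Hj /ssrnat.ltP Hk; have := H j k Hj Hk; rewrite /delta.
- by apply/ssrnat.ltP.
- by apply/ssrnat.ltP.
Qed.
End MC.

Theorem mainTheorem9 :
  forall (d : nat) (rho : bop), is_state d rho ->
  forall (e M s : R),
    ER_is d rho e ->
    is_lub (prod_overlaps d rho) M ->
    vN_entropy d rho s ->
    e >= - log2 M - s.
Proof.
  exact (main_aux MC.rc).
Qed.
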